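(* Let $a>b>0$, $c>0$, let $C=\{(x,y,z)\in\mathbb{R}^3:\frac{x^2}{a^2}+\frac{y^2}{b^2}-\frac{z^2}{c^2}=0\}$, and consider the spherical conic $C\cap\mathbb{S}^2$. The orthogonal projection of this conic onto the $yz$-plane (the plane of the principal and minor axes) is contained in a hyperbola, and the lines in which the two cyclic planes of $C$ intersect the $yz$-plane are the asymptotes of this hyperbola.
   Context: A cyclic plane of a quadratic cone (apex at the origin) is a plane through the origin such that every parallel plane not through the origin intersects the cone in a circle (with respect to the standard Euclidean metric of $\mathbb{R}^3$). $\mathbb{S}^2$ is the unit sphere. *)

(* Defs.v *)
From Stdlib Require Import Reals.
Open Scope R_scope.

Definition pt3 : Type := (R * R * R)%type.
Definition pt2 : Type := (R * R)%type.

Definition dot3 (p q : pt3) : R :=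
  let '(x1, y1, z1) := p in let '(x2, y2, z2) := q in x1 * x2 + y1 * y2 + z1 * z2.
Definition sub3 (p q : pt3) : pt3 :=
  let '(x1, y1, z1) := p in let '(x2, y2, z2) := q in (x1 - x2, y1 - y2, z1 - z2).

Definition dot2 (p q : pt2) : R := fst p * fst q + snd p * snd q.
Definition sub2 (p q : pt2) : pt2 := (fst p - fst q, snd p - snd q).
Definition add2 (p q : pt2) : pt2 := (fst p + fst q, snd p + snd q).
Definition scal2 (t : R) (p : pt2) : pt2 := (t * fst p, t * snd p).

Definition same_set {T : Type} (A B : T -> Prop) : Prop := forall x, A x <-> B x.

Definition cone (a b c : R) (p : pt3) : Prop :=
  let '(x, y, z) := p in x ^ 2 / a ^ 2 + y ^ 2 / b ^ 2 - z ^ 2 / c ^ 2 = 0.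

Definition sphere2 (p : pt3) : Prop := dot3 p p = 1.

Definition is_circle3 (S : pt3 -> Prop) : Prop :=
  exists (ctr m : pt3) (r : R),
    m <> (0, 0, 0) /\ 0 < r /\
    forall p, S p <-> (dot3 (sub3 p ctr) m = 0 /\ dot3 (sub3 p ctr) (sub3 p ctr) = r ^ 2).

(** A cyclic plane of the cone K (apex at the origin): a plane through the
    origin (normal n) such that every parallel plane not through the origin
    (n . p = d, d <> 0) meets K in a circle. *)
Definition cyclic_plane (K : pt3 -> Prop) (P : pt3 -> Prop) : Prop :=
  exists n : pt3, n <> (0, 0, 0) /\
    (forall p, P p <-> dot3 n p = 0) /\
    forall d : R, d <> 0 -> is_circle3 (fun p => dot3 n p = d /\ K p).

Definition hyp_data_ok (e1 e2 : pt2) (p q : R) : Prop :=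
  dot2 e1 e1 = 1 /\ dot2 e2 e2 = 1 /\ dot2 e1 e2 = 0 /\ 0 < p /\ 0 < q.

Definition hyperbola (w0 e1 e2 : pt2) (p q : R) (w : pt2) : Prop :=
  (dot2 (sub2 w w0) e1) ^ 2 / p ^ 2 - (dot2 (sub2 w w0) e2) ^ 2 / q ^ 2 = 1.

Definition line2 (w0 d : pt2) (w : pt2) : Prop := exists t : R, w = add2 w0 (scal2 t d).

Definition is_asymptote (w0 e1 e2 : pt2) (p q : R) (L : pt2 -> Prop) : Prop :=
  same_set L (line2 w0 (add2 (scal2 p e1) (scal2 q e2))) \/
  same_set L (line2 w0 (add2 (scal2 p e1) (scal2 (- q) e2))).

Definition proj_yz (p : pt3) : pt2 := let '(_, y, z) := p in (y, z).

Definition trace_yz (P : pt3 -> Prop) (w : pt2) : Prop := P (0, fst w, snd w).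

(* Main.v *)
Require Import Defs.
From Stdlib Require Import Reals Lra Psatz.
Open Scope R_scope.

Lemma dot3E a1 a2 a3 b1 b2 b3 :
  dot3 (a1, a2, a3) (b1, b2, b3) = a1 * b1 + a2 * b2 + a3 * b3.
Proof. reflexivity. Qed.
Lemma sub3E a1 a2 a3 b1 b2 b3 :
  sub3 (a1, a2, a3) (b1, b2, b3) = (a1 - b1, a2 - b2, a3 - b3).
Proof. reflexivity. Qed.

Lemma circle_from_sphere (S : pt3 -> Prop) n1 n2 n3 c1 c2 c3 R2 d :
  (n1, n2, n3) <> (0, 0, 0) ->
  (d - (n1 * c1 + n2 * c2 + n3 * c3)) ^ 2 < R2 * (n1 ^ 2 + n2 ^ 2 + n3 ^ 2) ->
  (forall x y z, S (x, y, z) <-> n1 * x + n2 * y + n3 * z = d /\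
        (x - c1) ^ 2 + (y - c2) ^ 2 + (z - c3) ^ 2 = R2) ->
  is_circle3 S.
Proof.
  intros Hn Hlt HS.
  set (N := n1 ^ 2 + n2 ^ 2 + n3 ^ 2) in *.
  assert (HN : 0 < N).
  { destruct (Rlt_or_le 0 N) as [h|h]; auto. exfalso; apply Hn.
    assert (n1 = 0) by (unfold N in h; nra).
    assert (n2 = 0) by (unfold N in h; nra).
    assert (n3 = 0) by (unfold N in h; nra). subst; reflexivity. }
  set (nc := n1 * c1 + n2 * c2 + n3 * c3) in *.
  set (k := (d - nc) / N).
  assert (hk : k * N = d - nc) by (unfold k; field; lra).
  assert (hpos : 0 < R2 - k ^ 2 * N).
  { assert (k ^ 2 * N * N = (d - nc) ^ 2) by (rewrite <- hk; ring).
    assert (h5 : (R2 - k ^ 2 * N) * N > 0) by lra.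
    destruct (Rlt_or_le 0 (R2 - k ^ 2 * N)) as [h6|h6]; auto.
    assert ((R2 - k ^ 2 * N) * N <= 0) by nra. lra. }
  exists (c1 + k * n1, c2 + k * n2, c3 + k * n3), (n1, n2, n3), (sqrt (R2 - k ^ 2 * N)).
  split; [exact Hn|]. split; [apply sqrt_lt_R0; exact hpos|].
  intros [[x y] z]. rewrite HS, !sub3E, !dot3E, pow2_sqrt by lra.
  assert (E1 : (x - (c1 + k * n1)) * n1 + (y - (c2 + k * n2)) * n2 + (z - (c3 + k * n3)) * n3
             = (n1 * x + n2 * y + n3 * z) - nc - k * N) by (unfold nc, N; ring).
  assert (E2 : (x - (c1 + k * n1)) * (x - (c1 + k * n1)) + (y - (c2 + k * n2)) * (y - (c2 + k * n2))
              + (z - (c3 + k * n3)) * (z - (c3 + k * n3))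
             = ((x - c1) ^ 2 + (y - c2) ^ 2 + (z - c3) ^ 2)
               - 2 * k * ((n1 * x + n2 * y + n3 * z) - nc) + k ^ 2 * N) by (unfold nc, N; ring).
  rewrite E1, E2. split; intros [h1 h2].
  - rewrite h1, h2, hk. split; [ring|]. rewrite <- hk. ring.
  - assert (h3 : n1 * x + n2 * y + n3 * z = d) by lra.
    split; [exact h3|]. rewrite h3 in h2. rewrite <- hk in h2. nra.
Qed.

Lemma cyc_exist (K : pt3 -> Prop) al be ga s u :
  0 < al -> 0 < be -> 0 < ga -> s ^ 2 = be - al -> u ^ 2 = ga + al ->
  (forall x y z, K (x, y, z) <-> al * x ^ 2 + be * y ^ 2 - ga * z ^ 2 = 0) ->
  cyclic_plane K (fun p => dot3 (0, s, u) p = 0).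
Proof.
  intros Hal Hbe Hga Hs Hu HK.
  exists (0, s, u). split.
  { intro H. injection H. intros hu' hs'. rewrite hu' in Hu. nra. }
  split; [intros; reflexivity|].
  intros d hd.
  set (D := d / al).
  assert (hD : d = D * al) by (unfold D; field; lra).
  apply (circle_from_sphere _ 0 s u 0 (- D * s / 2) (D * u / 2) (D ^ 2 * (s ^ 2 + u ^ 2) / 4) d).
  - intro H. injection H. intros hu' hs'. rewrite hu' in Hu. nra.
  - assert (E : D ^ 2 * (s ^ 2 + u ^ 2) / 4 * (0 ^ 2 + s ^ 2 + u ^ 2)
              - (d - (0 * 0 + s * (- D * s / 2) + u * (D * u / 2))) ^ 2
              = D ^ 2 * ((u ^ 2 - al) * (s ^ 2 + al))) by (rewrite hD; field).
    assert (hD2 : 0 < D ^ 2).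
    { assert (D <> 0) by (intro h; rewrite h in hD; lra). nra. }
    assert (0 < D ^ 2 * ((u ^ 2 - al) * (s ^ 2 + al))).
    { rewrite Hs, Hu. replace (ga + al - al) with ga by ring.
      replace (be - al + al) with be by ring. apply Rmult_lt_0_compat; nra. }
    lra.
  - intros x y z. rewrite dot3E, HK.
    assert (EQ : al * x ^ 2 + be * y ^ 2 - ga * z ^ 2
       = al * ((x - 0) ^ 2 + (y - - D * s / 2) ^ 2 + (z - D * u / 2) ^ 2 - D ^ 2 * (s ^ 2 + u ^ 2) / 4)
         + (s * y + u * z - d) * (s * y - u * z)).
    { replace be with (s ^ 2 + al) by lra. replace ga with (u ^ 2 - al) by lra.
      rewrite hD. field. }
    rewrite EQ. split; intros [h1 h2]; split; auto.
    + assert (h0 : s * y + u * z - d = 0) by lra. rewrite h0 in h2.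
      assert (h4 : al * ((x - 0) ^ 2 + (y - - D * s / 2) ^ 2 + (z - D * u / 2) ^ 2
                        - D ^ 2 * (s ^ 2 + u ^ 2) / 4) = 0) by lra.
      destruct (Rmult_integral _ _ h4); lra.
    + assert (h0 : s * y + u * z - d = 0) by lra. rewrite h0, h2. ring.
Qed.

Lemma cyc_unique (K : pt3 -> Prop) al be ga s t :
  0 < al -> al < be -> 0 < ga -> s ^ 2 = be - al -> t ^ 2 = ga + al -> 0 < s -> 0 < t ->
  (forall x y z, K (x, y, z) <-> al * x ^ 2 + be * y ^ 2 - ga * z ^ 2 = 0) ->
  forall P, cyclic_plane K P ->
    same_set P (fun p => dot3 (0, s, - t) p = 0) \/ same_set P (fun p => dot3 (0, s, t) p = 0).
Proof.
  intros Hal Hbe Hga Hs Ht Hs0 Ht0 HK P [[[n1 n2] n3] [Hn [HP Hc]]].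
  destruct (Hc 1 R1_neq_R0) as [[[c1 c2] c3] [[[m1 m2] m3] [r [Hm [Hr Hci]]]]].
  set (Qc := al * c1 ^ 2 + be * c2 ^ 2 - ga * c3 ^ 2).
  set (lam := - Qc / r ^ 2).
  assert (key : forall w1 w2 w3, w1 * m1 + w2 * m2 + w3 * m3 = 0 ->
     n1 * w1 + n2 * w2 + n3 * w3 = 0 /\
     al * w1 ^ 2 + be * w2 ^ 2 - ga * w3 ^ 2 = lam * (w1 ^ 2 + w2 ^ 2 + w3 ^ 2)).
  { intros w1 w2 w3 hw.
    set (W := w1 ^ 2 + w2 ^ 2 + w3 ^ 2).
    destruct (Rlt_or_le 0 W) as [hW|hW].
    2:{ assert (w1 = 0) by (unfold W in hW; nra).
        assert (w2 = 0) by (unfold W in hW; nra).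
        assert (w3 = 0) by (unfold W in hW; nra). subst w1 w2 w3. split; [ring|]. unfold W. replace (0^2+0^2+0^2) with 0 by ring. rewrite Rmult_0_r. ring. }
    set (l := r / sqrt W).
    assert (hsW : 0 < sqrt W) by (apply sqrt_lt_R0; exact hW).
    assert (hl : 0 < l) by (unfold l; apply Rdiv_lt_0_compat; lra).
    assert (hl2 : l ^ 2 * W = r ^ 2).
    { unfold l. rewrite <- (pow2_sqrt W) at 2 by lra. field. lra. }
    assert (Hp := proj2 (Hci (c1 + l * w1, c2 + l * w2, c3 + l * w3))).
    assert (Hm' := proj2 (Hci (c1 - l * w1, c2 - l * w2, c3 - l * w3))).
    rewrite !sub3E, !dot3E, HK in Hp, Hm'.
    destruct Hp as [hp1 hp2].
    { split.
      - replace ((c1 + l * w1 - c1) * m1 + (c2 + l * w2 - c2) * m2 + (c3 + l * w3 - c3) * m3)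
          with (l * (w1 * m1 + w2 * m2 + w3 * m3)) by ring. rewrite hw. ring.
      - rewrite <- hl2. unfold W. ring. }
    destruct Hm' as [hm1 hm2].
    { split.
      - replace ((c1 - l * w1 - c1) * m1 + (c2 - l * w2 - c2) * m2 + (c3 - l * w3 - c3) * m3)
          with (- l * (w1 * m1 + w2 * m2 + w3 * m3)) by ring. rewrite hw. ring.
      - rewrite <- hl2. unfold W. ring. }
    split.
    - assert (h : 2 * l * (n1 * w1 + n2 * w2 + n3 * w3) = 0).
      { replace (2 * l * (n1 * w1 + n2 * w2 + n3 * w3)) with
          ((n1 * (c1 + l * w1) + n2 * (c2 + l * w2) + n3 * (c3 + l * w3))
         - (n1 * (c1 - l * w1) + n2 * (c2 - l * w2) + n3 * (c3 - l * w3))) by ring.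
        rewrite hp1, hm1. ring. }
      destruct (Rmult_integral _ _ h) as [h'|h']; [lra|exact h'].
    - set (Qw := al * w1 ^ 2 + be * w2 ^ 2 - ga * w3 ^ 2).
      assert (h : Qc + l ^ 2 * Qw = 0).
      { assert (E : al * (c1 + l * w1) ^ 2 + be * (c2 + l * w2) ^ 2 - ga * (c3 + l * w3) ^ 2
                  + (al * (c1 - l * w1) ^ 2 + be * (c2 - l * w2) ^ 2 - ga * (c3 - l * w3) ^ 2)
                  = 2 * (Qc + l ^ 2 * Qw)) by (unfold Qc, Qw; ring).
        lra. }
      assert (hr2 : 0 < r ^ 2) by nra.
      apply (Rmult_eq_reg_r (r ^ 2)); [|lra].
      unfold lam. replace (- Qc / r ^ 2 * W * r ^ 2) with (- Qc * W) by (field; lra).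
      rewrite <- hl2.
      assert (Qw * l ^ 2 = - Qc) by lra.
      replace (Qw * (l ^ 2 * W)) with ((Qw * l ^ 2) * W) by ring.
      rewrite H. ring. }
  assert (x1 : n2 * m3 - n3 * m2 = 0).
  { destruct (key 0 m3 (- m2)) as [h _]; [ring|]. lra. }
  assert (x2 : n1 * m3 - n3 * m1 = 0).
  { destruct (key m3 0 (- m1)) as [h _]; [ring|]. lra. }
  assert (x3 : n1 * m2 - n2 * m1 = 0).
  { destruct (key m2 (- m1) 0) as [h _]; [ring|]. lra. }
  assert (K2 : forall w1 w2 w3, n1 * w1 + n2 * w2 + n3 * w3 = 0 ->
     al * w1 ^ 2 + be * w2 ^ 2 - ga * w3 ^ 2 = lam * (w1 ^ 2 + w2 ^ 2 + w3 ^ 2)).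
  { intros w1 w2 w3 hw. apply key.
    set (mw := w1 * m1 + w2 * m2 + w3 * m3).
    assert (e1 : n1 * mw = m1 * (n1 * w1 + n2 * w2 + n3 * w3) + (n1 * m2 - n2 * m1) * w2
                 + (n1 * m3 - n3 * m1) * w3) by (unfold mw; ring).
    assert (e2 : n2 * mw = m2 * (n1 * w1 + n2 * w2 + n3 * w3) - (n1 * m2 - n2 * m1) * w1
                 + (n2 * m3 - n3 * m2) * w3) by (unfold mw; ring).
    assert (e3 : n3 * mw = m3 * (n1 * w1 + n2 * w2 + n3 * w3) - (n1 * m3 - n3 * m1) * w1
                 - (n2 * m3 - n3 * m2) * w2) by (unfold mw; ring).
    rewrite hw, x1, x2, x3 in *.
    destruct (Req_dec mw 0) as [h|h]; [exact h|]. exfalso. apply Hn.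
    assert (n1 = 0) by (apply (Rmult_eq_reg_r mw); [lra|exact h]).
    assert (n2 = 0) by (apply (Rmult_eq_reg_r mw); [lra|exact h]).
    assert (n3 = 0) by (apply (Rmult_eq_reg_r mw); [lra|exact h]).
    subst. reflexivity. }
  assert (T1 := K2 n2 (- n1) 0 ltac:(ring)).
  assert (T2 := K2 n3 0 (- n1) ltac:(ring)).
  assert (T3 := K2 0 n3 (- n2) ltac:(ring)).
  assert (T4 := K2 n2 (n3 - n1) (- n2) ltac:(ring)).
  assert (T5 := K2 n3 n3 (- n1 - n2) ltac:(ring)).
  assert (hB : (be - lam) * (n1 * n3) = 0) by lra.
  assert (hC : (- ga - lam) * (n1 * n2) = 0) by lra.
  destruct (Req_dec n1 0) as [h1|h1].
  2:{ exfalso.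
      destruct (Req_dec n3 0) as [h3|h3].
      - subst n3.
        assert (hh : (- ga - lam) * n1 ^ 2 = 0) by lra.
        destruct (Rmult_integral _ _ hh) as [hC0|hC0].
        2:{ exact (pow_nonzero _ 2 h1 hC0). }
        assert (hl : lam = - ga) by lra. rewrite hl in T1.
        assert (n1 ^ 2 <> 0) by (intro hz; exact (pow_nonzero _ 2 h1 hz)).
        assert (0 <= n1 ^ 2) by apply pow2_ge_0.
        assert (0 <= n2 ^ 2) by apply pow2_ge_0.
        assert (0 < n1 ^ 2) by lra.
        nra.
      - assert (hB0 : be - lam = 0).
        { destruct (Rmult_integral _ _ hB) as [h|h]; [exact h|].
          destruct (Rmult_integral _ _ h); contradiction. }
        assert (lam = be) by lra.
        destruct (Req_dec n2 0) as [h2|h2].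
        + subst n2. rewrite H in T2.
          assert (n1 ^ 2 <> 0) by (intro hz; exact (pow_nonzero _ 2 h1 hz)).
          assert (0 <= n1 ^ 2) by apply pow2_ge_0.
          assert (0 <= n3 ^ 2) by apply pow2_ge_0.
          assert (0 < n1 ^ 2) by lra.
          nra.
        + destruct (Rmult_integral _ _ hC) as [h|h].
          * lra.
          * destruct (Rmult_integral _ _ h); contradiction. }
  subst n1.
  assert (hlam : lam = al).
  { destruct (Req_dec n2 0) as [h2|h2].
    - destruct (Req_dec n3 0) as [h3|h3].
      + exfalso. apply Hn. subst. reflexivity.
      + assert (h : (al - lam) * n3 ^ 2 = 0) by lra.
        destruct (Rmult_integral _ _ h) as [h'|h']; [lra|].
        exfalso. exact (pow_nonzero _ 2 h3 h').
    - assert (h : (al - lam) * n2 ^ 2 = 0) by lra.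
      destruct (Rmult_integral _ _ h) as [h'|h']; [lra|].
      exfalso. exact (pow_nonzero _ 2 h2 h'). }
  rewrite hlam in T3.
  assert (hq : (s * n3 - t * n2) * (s * n3 + t * n2) = 0).
  { replace ((s * n3 - t * n2) * (s * n3 + t * n2)) with (s ^ 2 * n3 ^ 2 - t ^ 2 * n2 ^ 2) by ring.
    rewrite Hs, Ht. lra. }
  assert (hn2 : n2 <> 0).
  { intro h2. subst n2. apply Hn.
    assert (h : (s * n3) * (s * n3) = 0) by (rewrite <- hq; ring).
    assert (h' : s * n3 = 0) by (destruct (Rmult_integral _ _ h); auto).
    destruct (Rmult_integral _ _ h') as [h''|h'']; [lra|]. rewrite h''. reflexivity. }
  destruct (Rmult_integral _ _ hq) as [hq'|hq'].
  - right. intros [[x y] z]. rewrite HP, !dot3E.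
    assert (E : n2 * (s * y + t * z) = s * (0 * x + n2 * y + n3 * z) - z * (s * n3 - t * n2)) by ring.
    rewrite hq' in E. split; intro h.
    + rewrite h in E. assert (n2 * (s * y + t * z) = 0) by lra.
      destruct (Rmult_integral _ _ H) as [h'|h']; [contradiction|lra].
    + assert (s * (0 * x + n2 * y + n3 * z) = 0) by nra.
      destruct (Rmult_integral _ _ H) as [h'|h']; [lra|exact h'].
  - left. intros [[x y] z]. rewrite HP, !dot3E.
    assert (E : n2 * (s * y - t * z) = s * (0 * x + n2 * y + n3 * z) - z * (s * n3 + t * n2)) by ring.
    rewrite hq' in E. split; intro h.
    + rewrite h in E. assert (n2 * (s * y - t * z) = 0) by lra.
      destruct (Rmult_integral _ _ H) as [h'|h']; [contradiction|lra].
    + assert (s * (0 * x + n2 * y + n3 * z) = 0) by nra.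
      destruct (Rmult_integral _ _ H) as [h'|h']; [lra|exact h'].
Qed.

Lemma line_lemma (p q y z : R) :
  line2 (0, 0) (add2 (scal2 p (0, 1)) (scal2 q (1, 0))) (y, z) <->
  exists k, y = k * q /\ z = k * p.
Proof.
  unfold line2, add2, scal2; cbn [fst snd]. split; intros [k h]; exists k.
  - injection h. intros h1 h2. split; [rewrite h2|rewrite h1]; ring.
  - destruct h as [h1 h2]. rewrite h1, h2. f_equal; ring.
Qed.

Theorem mainTheorem8 (a b c : R) (hba : b < a) (hb : 0 < b) (hc : 0 < c) :
  (* C has exactly two cyclic planes *)
  (exists P1 P2 : pt3 -> Prop,
      cyclic_plane (cone a b c) P1 /\ cyclic_plane (cone a b c) P2 /\
      ~ same_set P1 P2 /\
      forall P, cyclic_plane (cone a b c) P -> same_set P P1 \/ same_set P P2) /\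
  (* there is a hyperbola in the yz-plane ... *)
  exists (w0 e1 e2 : pt2) (p q : R),
    hyp_data_ok e1 e2 p q /\
    (* ... containing the projection of the spherical conic C ∩ S^2 ... *)
    (forall v : pt3, cone a b c v -> sphere2 v -> hyperbola w0 e1 e2 p q (proj_yz v)) /\
    (* ... whose asymptotes are exactly the traces of the cyclic planes on the yz-plane *)
    (forall L : pt2 -> Prop,
        is_asymptote w0 e1 e2 p q L <->
        exists P, cyclic_plane (cone a b c) P /\ same_set L (trace_yz P)).
Proof.
  set (al := / a ^ 2). set (be := / b ^ 2). set (ga := / c ^ 2).
  assert (Hal : 0 < al) by (unfold al; apply Rinv_0_lt_compat; nra).
  assert (Hbe : 0 < be) by (unfold be; apply Rinv_0_lt_compat; nra).
  assert (Hga : 0 < ga) by (unfold ga; apply Rinv_0_lt_compat; nra).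
  assert (Hab : al < be) by (unfold al, be; apply Rinv_lt_contravar; [apply Rmult_lt_0_compat; apply pow_lt; lra | simpl; nra]).
  assert (HK : forall x y z, cone a b c (x, y, z) <-> al * x ^ 2 + be * y ^ 2 - ga * z ^ 2 = 0).
  { intros x y z. unfold cone.
    replace (x ^ 2 / a ^ 2 + y ^ 2 / b ^ 2 - z ^ 2 / c ^ 2)
      with (al * x ^ 2 + be * y ^ 2 - ga * z ^ 2) by (unfold al, be, ga, Rdiv; ring).
    tauto. }
  set (s := sqrt (be - al)). set (t := sqrt (ga + al)).
  assert (Hs : s ^ 2 = be - al) by (apply pow2_sqrt; lra).
  assert (Ht : t ^ 2 = ga + al) by (apply pow2_sqrt; lra).
  assert (Hs0 : 0 < s) by (apply sqrt_lt_R0; lra).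
  assert (Ht0 : 0 < t) by (apply sqrt_lt_R0; lra).
  set (P1 := fun p : pt3 => dot3 (0, s, - t) p = 0).
  set (P2 := fun p : pt3 => dot3 (0, s, t) p = 0).
  assert (C1 : cyclic_plane (cone a b c) P1).
  { apply (cyc_exist _ al be ga s (- t)); [lra|lra|lra|exact Hs| rewrite <- Ht; ring | exact HK]. }
  assert (C2 : cyclic_plane (cone a b c) P2).
  { apply (cyc_exist _ al be ga s t); [lra|lra|lra|exact Hs| exact Ht | exact HK]. }
  assert (U := cyc_unique _ al be ga s t Hal Hab Hga Hs Ht Hs0 Ht0 HK).
  set (ra := sqrt al).
  assert (Hra : ra ^ 2 = al) by (apply pow2_sqrt; lra).
  assert (Hra0 : 0 < ra) by (apply sqrt_lt_R0; lra).
  assert (L1 : forall y z, line2 (0, 0) (add2 (scal2 (ra / t) (0, 1)) (scal2 (ra / s) (1, 0))) (y, z)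
                <-> P1 (0, y, z)).
  { intros y z. rewrite line_lemma. unfold P1. rewrite dot3E. split.
    - intros [k [h1 h2]]. rewrite h1, h2. field. lra.
    - intro h. exists (s * y / ra). split; [field; lra|].
      replace (s * y) with (t * z) by lra. field. lra. }
  assert (L2 : forall y z, line2 (0, 0) (add2 (scal2 (ra / t) (0, 1)) (scal2 (- (ra / s)) (1, 0))) (y, z)
                <-> P2 (0, y, z)).
  { intros y z. rewrite line_lemma. unfold P2. rewrite dot3E. split.
    - intros [k [h1 h2]]. rewrite h1, h2. field. lra.
    - intro h. exists (- s * y / ra). split; [field; lra|].
      replace (- s * y) with (t * z) by lra. field. lra. }
  split.
  { exists P1, P2. split; [exact C1|]. split; [exact C2|]. split.
    - intro H. specialize (H (0, t, s)). unfold P1, P2 in H. rewrite !dot3E in H.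
      assert (0 * 0 + s * t + t * s = 0) by (apply H; ring). nra.
    - exact (U). }
  exists (0, 0), (0, 1), (1, 0), (ra / t), (ra / s).
  split.
  { unfold hyp_data_ok, dot2; cbn [fst snd].
    split; [ring|]. split; [ring|]. split; [ring|].
    split; apply Rdiv_lt_0_compat; lra. }
  split.
  { intros [[x y] z] hv hs. rewrite HK in hv. unfold sphere2 in hs. rewrite dot3E in hs.
    unfold hyperbola, proj_yz, sub2, dot2; cbn [fst snd].
    replace ((y - 0) * 0 + (z - 0) * 1) with z by ring.
    replace ((y - 0) * 1 + (z - 0) * 0) with y by ring.
    replace (z ^ 2 / (ra / t) ^ 2 - y ^ 2 / (ra / s) ^ 2) with ((t ^ 2 * z ^ 2 - s ^ 2 * y ^ 2) / ra ^ 2)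
      by (field; lra).
    rewrite Hs, Ht, Hra. apply (Rmult_eq_reg_r al); [|lra].
    field_simplify; [|lra]. nra. }
  intros L. split.
  - intros [H|H].
    + exists P1. split; [exact C1|]. intros [y z]. rewrite (H (y, z)). unfold trace_yz; cbn [fst snd].
      apply L1.
    + exists P2. split; [exact C2|]. intros [y z]. rewrite (H (y, z)). unfold trace_yz; cbn [fst snd].
      apply L2.
  - intros [P [HcP HL]]. destruct (U P HcP) as [h|h].
    + left. intros [y z]. rewrite (HL (y, z)). unfold trace_yz; cbn [fst snd]. rewrite (h (0, y, z)). symmetry. apply L1.
    + right. intros [y z]. rewrite (HL (y, z)). unfold trace_yz; cbn [fst snd]. rewrite (h (0, y, z)). symmetry. apply L2.
Qed.
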